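(* Let $G$ be a cubic graph of order $2n\geq 8$. If there exist a perfect matching $M$ of $G$ and a matching $N$ of $G$ with $|N|=n-1$ such that $M\cap N=\emptyset$, then $\chi'_{[n-1]}(G)=4$.
   Context: All graphs are finite, simple (no loops, no parallel edges), connected and cubic. For a positive integer $k$, a $[k]$-matching of $G$ is a matching of $G$ with exactly $k$ edges. The excessive $[k]$-index $\chi'_{[k]}(G)$ is the minimum number of $[k]$-matchings of $G$ whose union is $E(G)$; if some edge of $G$ lies in no $[k]$-matching, one sets $\chi'_{[k]}(G)=\infty$. *)

(* Defs.v *)
From mathcomp Require Import all_boot.
Set Implicit Arguments. Unset Strict Implicit. Unset Printing Implicit Defensive.

Definition simple_graph (T : finType) (adj : rel T) : Prop :=
  symmetric adj /\ irreflexive adj.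

Definition connected_graph (T : finType) (adj : rel T) : Prop :=
  forall x y : T, connect adj x y.

Definition cubic (T : finType) (adj : rel T) : Prop :=
  forall x : T, #|[set y | adj x y]| = 3.

Definition edges (T : finType) (adj : rel T) : {set {set T}} :=
  [set e | [exists x, exists y, adj x y && (e == [set x; y])]].

Definition matching (T : finType) (adj : rel T) (F : {set {set T}}) : Prop :=
  F \subset edges adj /\
  (forall e1 e2, e1 \in F -> e2 \in F -> e1 != e2 -> [disjoint e1 & e2]).

Definition perfect_matching (T : finType) (adj : rel T) (F : {set {set T}}) : Prop :=
  matching adj F /\ (forall x : T, exists2 e, e \in F & x \in e).

Definition k_matching (T : finType) (adj : rel T) (k : nat) (F : {set {set T}}) : Prop :=
  matching adj F /\ #|F| = k.

Definition k_cover (T : finType) (adj : rel T) (k : nat) (Ms : seq {set {set T}}) : Prop :=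
  (forall F, F \in Ms -> k_matching adj k F) /\
  \bigcup_(F <- Ms) F = edges adj.

(* chi'_[k](G) = m : m is the minimum number of [k]-matchings whose union is
   E(G) (in particular such a cover exists, so the index is finite). *)
Definition excessive_index_eq (T : finType) (adj : rel T) (k m : nat) : Prop :=
  (exists Ms, size Ms = m /\ k_cover adj k Ms) /\
  (forall Ms, k_cover adj k Ms -> m <= size Ms).

(* Main.v *)
Require Import Defs.
From mathcomp Require Import all_boot zify.
Set Implicit Arguments. Unset Strict Implicit. Unset Printing Implicit Defensive.

Ltac neq := repeat match goal with
  | H : is_true (?x != ?y) |- context [?x == ?y] => rewrite (negbTE H)
  | H : is_true (?x != ?y) |- context [?y == ?x] => rewrite [y == x]eq_sym (negbTE H)
  end.

Ltac gen := rewrite /= ?inE; neq; rewrite ?eqxx /= ?orbT ?andbT ?orbF; done.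

Ltac splitx H := match type of H with
  | is_true (_ || _) => case/orP: H => [H|H]; [|splitx H]
  | _ => idtac end.

Ltac nors H := rewrite /= ?inE in H; repeat (case/norP: H => ? H).

Lemma lt_2n k n : k < 8 -> 4 <= n -> k < 2 * n.
Proof. lia. Qed.

Section Basics.
Variables (T : finType) (adj : rel T).
Hypothesis adj_sym : symmetric adj.
Hypothesis adj_irr : irreflexive adj.

Lemma set2C (x y : T) : [set x; y] = [set y; x].
Proof. by rewrite setUC. Qed.

Lemma edgeP x y : adj x y -> [set x; y] \in edges adj.
Proof. move=> h; rewrite inE; apply/existsP; exists x; apply/existsP; exists y; by rewrite h eqxx. Qed.

Lemma edgesP e : e \in edges adj -> exists x y, adj x y /\ e = [set x; y].
Proof. rewrite inE => /existsP[x /existsP[y /andP[h /eqP ->]]]; by exists x, y. Qed.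

Lemma adj_neq x y : adj x y -> x != y.
Proof. by apply: contraTneq => ->; rewrite adj_irr. Qed.

Lemma card_edge e : e \in edges adj -> #|e| = 2.
Proof. move/edgesP=> [x [y [h ->]]]; by rewrite cards2 adj_neq. Qed.

Lemma inv_matching (D : {set T}) (f : T -> T) :
  (forall t, t \in D -> f t \in D) -> (forall t, t \in D -> f (f t) = t) ->
  (forall t, t \in D -> adj t (f t)) ->
  matching adj [set [set t; f t] | t in D] /\ 2 * #|[set [set t; f t] | t in D]| = #|D|.
Proof.
move=> fD ff fa.
have key: forall t c, t \in D -> c \in [set t; f t] -> [set t; f t] = [set c; f c].
  move=> t c tD; rewrite !inE => /orP[/eqP->|/eqP->]//. by rewrite ff // set2C.
have mat : matching adj [set [set t; f t] | t in D].
  split.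
    apply/subsetP=> e /imsetP[t tD ->]; exact: edgeP (fa t tD).
  move=> e1 e2 /imsetP[t1 t1D ->] /imsetP[t2 t2D ->] ne.
  rewrite -setI_eq0; apply/eqP/setP=> c; rewrite in_setI in_set0.
  apply/negP => /andP[c1 c2]; move: ne; by rewrite (key _ _ t1D c1) (key _ _ t2D c2) eqxx.
split=>//.
have ->: #|D| = #|[set [set t; f t] | t in D]| * 2.
  apply: card_uniform_partition.
  - move=> e /imsetP[t tD ->]; rewrite cards2 adj_neq //; exact: fa.
  - rewrite /partition; apply/and3P; split.
    + apply/eqP/setP=> c; apply/bigcupP/idP => [[e /imsetP[t tD ->]]|cD].
        rewrite !inE => /orP[/eqP->|/eqP->] //; exact: fD.
      exists [set c; f c]; [exact: imset_f | by rewrite !inE eqxx].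
    + apply/trivIsetP => e1 e2 h1 h2; exact: mat.2.
    + apply/imsetP=> [[t tD /esym/setP/(_ t)]]; by rewrite !inE eqxx.
by rewrite mulnC.
Qed.

Hypothesis cub : cubic adj.

Lemma card_edges : 2 * #|edges adj| = 3 * #|T|.
Proof.
have h1: forall x, #|[set e in edges adj | x \in e]| = 3.
  move=> x; rewrite -(cub x); set Nb := [set y | adj x y].
  have ->: [set e in edges adj | x \in e] = [set [set x; y] | y in Nb].
    apply/setP=> e; rewrite inE; apply/andP/imsetP => [[/edgesP[a [b [h ->]]] xe]|[y]].
      move: xe h; rewrite !inE => /orP[/eqP<-|/eqP<-] h.
        by exists b; rewrite /Nb ?inE.
      by exists a; [rewrite /Nb inE adj_sym | rewrite set2C].
    rewrite /Nb inE => h ->; split; [exact: edgeP | by rewrite !inE eqxx].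
  rewrite card_in_imset // => y z; rewrite /Nb !inE => hy hz /setP/(_ y).
  rewrite !inE eqxx orbT => /esym/orP[/eqP e|/eqP //].
  by move: hy; rewrite e adj_irr.
have h2: \sum_(e in edges adj) #|e| = \sum_(x : T) #|[set e in edges adj | x \in e]|.
  transitivity (\sum_(e in edges adj) \sum_(x in e) 1).
    by apply: eq_bigr => e _; rewrite sum1_card.
  rewrite (exchange_big_dep xpredT) //=; apply: eq_bigr => x _.
  rewrite -sum1_card; apply: eq_bigl => e; by rewrite inE.
have h3: \sum_(e in edges adj) #|e| = #|edges adj| * 2.
  by rewrite -sum_nat_const; apply: eq_bigr => e /card_edge.
have h4: \sum_(x : T) #|[set e in edges adj | x \in e]| = #|T| * 3.
  by rewrite -sum_nat_const; apply: eq_bigr => x _; rewrite h1.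
lia.
Qed.

Lemma cover_size k Ms : k_cover adj k Ms -> #|edges adj| <= size Ms * k.
Proof.
case=> hk <-; elim: Ms hk => [|F Ms IH] hk; first by rewrite big_nil cards0.
rewrite big_cons /=.
have hF : #|F| = k by case: (hk F (mem_head _ _)).
have := IH (fun G hG => hk G (mem_behead (s := F :: Ms) hG)).
have := (leq_card_setU F (\bigcup_(j <- Ms) j)).1.
move=> h1 h2; rewrite /= mulSn; apply: (leq_trans h1); rewrite hF leq_add2l; exact: h2.
Qed.

End Basics.

Section Partner.
Variable (T : eqType).
Fixpoint partner (L : seq (T * T)) (t : T) : option T :=
  if L is xy :: L' then
    (if t == xy.1 then Some xy.2 else if t == xy.2 then Some xy.1 else partner L' t)
  else None.
Definition flatL (L : seq (T * T)) := flatten [seq [:: xy.1; xy.2] | xy <- L].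

Lemma flatL_cons x y L : flatL ((x, y) :: L) = x :: y :: flatL L.
Proof. by []. Qed.

Lemma partner_in L t y : partner L t = Some y -> (t \in flatL L) && (y \in flatL L).
Proof.
elim: L => [|[x0 y0] L IH] //; rewrite flatL_cons /= !inE.
case: (t =P x0) => [->|_]; first by case=> <-; rewrite !eqxx ?orbT.
case: (t =P y0) => [->|_]; first by case=> <-; rewrite !eqxx ?orbT.
by move/IH/andP=> [-> ->]; rewrite !orbT.
Qed.

Lemma partner_none L t : partner L t = None -> t \notin flatL L.
Proof.
elim: L => [|[x0 y0] L IH] //; rewrite flatL_cons /= !inE.
case: (t =P x0) => // _; case: (t =P y0) => // _ /=; exact: IH.
Qed.

Lemma partner_inv L t y : uniq (flatL L) -> partner L t = Some y -> partner L y = Some t.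
Proof.
elim: L => [|[x0 y0] L IH] //; rewrite flatL_cons /= !inE => /and3P[/norP[xy xL] yL uL].
case: (t =P x0) => [->|tx].
  by case=> <-; rewrite eq_sym (negbTE xy) eqxx.
case: (t =P y0) => [->|ty]; first by case=> <-; rewrite eqxx.
move=> h; have /andP[_ yin] := partner_in h.
have -> : (y == x0) = false by apply/negbTE; apply: contraNneq xL => <-.
have -> : (y == y0) = false by apply/negbTE; apply: contraNneq yL => <-.
exact: IH.
Qed.

Lemma partner_mem L x y : uniq (flatL L) -> (x, y) \in L -> partner L x = Some y.
Proof.
elim: L => [|[x0 y0] L IH] //; rewrite flatL_cons /= !inE => /and3P[/norP[xy xL] yL uL].
case/orP => [/eqP[-> ->]|h]; first by rewrite eqxx.
have xin : x \in flatL L.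
  elim: L {IH xL yL uL} h => [|[a b] L' IH'] //=; rewrite !inE.
  by case/orP => [/eqP[-> _]|/IH' ->]; rewrite ?eqxx ?orbT.
have -> : (x == x0) = false by apply/negbTE; apply: contraNneq xL => <-.
have -> : (x == y0) = false by apply/negbTE; apply: contraNneq yL => <-.
exact: IH.
Qed.

Lemma partner_pair L t y : partner L t = Some y -> exists2 xy, xy \in L & (xy = (t, y) \/ xy = (y, t)).
Proof.
elim: L => [|[x0 y0] L IH] //=.
case: (t =P x0) => [->|_]; first by case=> <-; exists (x0, y0); rewrite ?mem_head; auto.
case: (t =P y0) => [->|_]; first by case=> <-; exists (x0, y0); rewrite ?mem_head; auto.
by move/IH => [xy h1 h2]; exists xy; rewrite // inE h1 orbT.
Qed.

End Partner.

Section Config.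
Variables (T : finType) (adj : rel T).
Hypothesis adj_sym : symmetric adj.
Hypothesis adj_irr : irreflexive adj.
Hypothesis cub : cubic adj.
Variable n : nat.
Hypothesis cardT : #|T| = 2 * n.
Variables (mu nu : T -> T) (p q : T).
Hypothesis mu_adj : forall x, adj x (mu x).
Hypothesis mu_inv : forall x, mu (mu x) = x.
Hypothesis pq : p != q.
Hypothesis nu_adj : forall x, x != p -> x != q -> adj x (nu x).
Hypothesis nu_inv : forall x, x != p -> x != q -> nu (nu x) = x.
Hypothesis nu_p : nu p = mu p.
Hypothesis nu_q : nu q = mu q.
Hypothesis nu_outp : forall x, x != p -> x != q -> nu x != p.
Hypothesis nu_outq : forall x, x != p -> x != q -> nu x != q.
Hypothesis nu_mu : forall x, x != p -> x != q -> nu x != mu x.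

Definition Rn x := [set y | adj x y] :\ mu x :\ nu x.

Lemma RnP x y : (y \in Rn x) = [&& y != nu x, y != mu x & adj x y].
Proof. by rewrite !inE. Qed.

Lemma Rn_card x : #|Rn x| = if (x == p) || (x == q) then 2 else 1.
Proof.
have h3 := cub x; rewrite /cubic in h3.
rewrite (cardsD1 (mu x)) inE mu_adj in h3.
rewrite /Rn.
have h2 : #|[set y | adj x y] :\ mu x| = 2 by move: h3; rewrite add1n; case.
rewrite (cardsD1 (nu x)) in h2; move: h2.
case: (x =P p) => [->|/eqP xp] /=.
  by rewrite nu_p !inE eqxx.
case: (x =P q) => [->|/eqP xq] /=.
  by rewrite nu_q !inE eqxx.
by rewrite !inE nu_mu ?nu_adj // add1n; case.
Qed.

Lemma Rn_sym x y : y \in Rn x -> x \in Rn y.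
Proof.
rewrite !RnP => /and3P[yn ym axy]; rewrite adj_sym axy andbT.
apply/andP; split.
  apply/negP => /eqP e.
  case: (y =P p) => [yp|/eqP yp].
    have h : mu x = y by rewrite e yp nu_p mu_inv.
    by rewrite h eqxx in ym.
  case: (y =P q) => [yq|/eqP yq].
    have h : mu x = y by rewrite e yq nu_q mu_inv.
    by rewrite h eqxx in ym.
  have h : nu x = y by rewrite e nu_inv.
  by rewrite h eqxx in yn.
by apply: contraNneq ym => ->; rewrite mu_inv.
Qed.

Definition rho x := odflt x [pick y in Rn x].

Lemma rhoE x : x != p -> x != q -> Rn x = [set rho x].
Proof.
move=> xp xq.
have : #|Rn x| == 1 by rewrite Rn_card (negbTE xp) (negbTE xq).
case/cards1P => r hr; rewrite /rho hr.
case: pickP => [y|h] /=; first by rewrite inE => /eqP->.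
by have := h r; rewrite inE eqxx.
Qed.

Lemma rho_Rn x y : x != p -> x != q -> (y \in Rn x) = (y == rho x).
Proof. by move=> xp xq; rewrite rhoE // inE. Qed.

Lemma rho_in x : x != p -> x != q -> rho x \in Rn x.
Proof. by move=> xp xq; rewrite rho_Rn. Qed.

Lemma rho_adj x : x != p -> x != q -> adj x (rho x).
Proof. by move=> xp xq; have := rho_in xp xq; rewrite RnP => /and3P[]. Qed.

Lemma rho_inv x : x != p -> x != q -> rho x != p -> rho x != q -> rho (rho x) = x.
Proof.
move=> xp xq rp rq; have := Rn_sym (rho_in xp xq).
by rewrite rho_Rn // => /eqP.
Qed.

Lemma rho_p x : x != p -> x != q -> rho x = p -> x \in Rn p.
Proof. move=> xp xq e; rewrite -e; apply: Rn_sym; exact: rho_in. Qed.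

Lemma rho_q x : x != p -> x != q -> rho x = q -> x \in Rn q.
Proof. move=> xp xq e; rewrite -e; apply: Rn_sym; exact: rho_in. Qed.

Definition patch (L : seq (T * T)) t := if partner L t is Some y then y else rho t.

Lemma build (L : seq (T * T)) (m1 m2 : T) :
  uniq (m1 :: m2 :: flatL L) -> p \in flatL L -> q \in flatL L ->
  (forall xy, xy \in L -> adj xy.1 xy.2) ->
  {subset Rn p <= m1 :: m2 :: flatL L} -> {subset Rn q <= m1 :: m2 :: flatL L} ->
  (forall x, x \in m1 :: m2 :: flatL L -> x != p -> x != q -> rho x \in m1 :: m2 :: flatL L) ->
  k_matching adj (n - 1) [set [set t; patch L t] | t in [set~ m1] :\ m2] /\
  (forall x y, (x, y) \in L -> [set x; y] \in [set [set t; patch L t] | t in [set~ m1] :\ m2]) /\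
  (forall t, t \notin m1 :: m2 :: flatL L -> [set t; rho t] \in [set [set t; patch L t] | t in [set~ m1] :\ m2]).
Proof.
set X := m1 :: m2 :: flatL L.
move=> uX pin qin Ladj Rp Rq clos.
move: (uX); rewrite /X /= !inE => /and3P[/norP[m12 m1L] m2L uL].
have out : forall t, t \notin X -> (t != p) && (t != q).
  move=> t tX; apply/andP; split; apply: contraNneq tX => ->; by rewrite !inE ?pin ?qin ?orbT.
have closX : forall t, t \notin X -> rho t \notin X.
  move=> t tX; have/andP[tp tq] := out t tX; apply/negP=> rX.
  case: (rho t =P p) => [rp|/eqP rp].
    by move: tX; rewrite (Rp _ (rho_p tp tq rp)).
  case: (rho t =P q) => [rq|/eqP rq].
    by move: tX; rewrite (Rq _ (rho_q tp tq rq)).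
  by move: tX; rewrite -{1}(rho_inv tp tq rp rq) (clos _ rX rp rq).
set D := [set~ m1] :\ m2.
have inD : forall t, (t \in D) = (t != m2) && (t != m1) by move=> t; rewrite !inE.
have flD : forall t, t \in flatL L -> t \in D.
  move=> t tL; rewrite inD; apply/andP; split; apply: contraTneq tL => ->; by [].
have DX : forall t, t \in D -> t \notin flatL L -> t \notin X.
  move=> t; rewrite inD /X !inE => /andP[t2 t1] /negbTE ->; by rewrite (negbTE t1) (negbTE t2).
have fD : forall t, t \in D -> patch L t \in D.
  move=> t tD; rewrite /patch; case E: (partner L t) => [y|].
    by apply: flD; case/andP: (partner_in E).
  have tX := DX _ tD (partner_none E).
  have := closX _ tX; rewrite /X !inE => /norP[r1 /norP[r2 _]]; by rewrite r1 r2.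
have ff : forall t, t \in D -> patch L (patch L t) = t.
  move=> t tD; rewrite /patch; case E: (partner L t) => [y|].
    by rewrite (partner_inv uL E).
  have tX := DX _ tD (partner_none E).
  have rX := closX _ tX.
  have -> : partner L (rho t) = None.
    case E2: (partner L (rho t)) => [z|] //.
    by move: rX; case/andP: (partner_in E2) => h _; rewrite /X !inE h !orbT.
  have/andP[tp tq] := out t tX; have/andP[rp rq] := out _ rX.
  exact: rho_inv.
have fa : forall t, t \in D -> adj t (patch L t).
  move=> t tD; rewrite /patch; case E: (partner L t) => [y|].
    have [[a b] h1 [[<- <-]|[<- <-]]] := partner_pair E; have := Ladj _ h1 => //=.
    by rewrite adj_sym.
  have/andP[tp tq] := out t (DX _ tD (partner_none E)); exact: rho_adj.
have [mat card] := inv_matching adj_irr fD ff fa.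
have cD : #|D| = 2 * n - 2.
  rewrite /D; have := cardsD1 m2 [set~ m1]; rewrite cardsC1 cardT !inE eq_sym m12 /= => h; lia.
split; first by split=> //; move: card; rewrite cD; set k := #|_|; lia.
split.
  move=> x y h; have <- : patch L x = y by rewrite /patch (partner_mem uL h).
  apply: imset_f; apply: flD.
  elim: (L) h => [|[a b] L' IH] //; rewrite inE flatL_cons !inE.
  by case/orP => [/eqP[-> _]|/IH ->]; rewrite ?eqxx ?orbT.
move=> t tX; have tD : t \in D.
  by move: tX; rewrite /X !inE => /norP[t1 /norP[t2 _]]; rewrite t1 t2.
have -> : rho t = patch L t.
  rewrite /patch; case E: (partner L t) => [y|] //.
  by move: tX; case/andP: (partner_in E) => h _; rewrite /X !inE h !orbT.
exact: imset_f.
Qed.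


Lemma cardD2 (c d : T) : c != d -> #|[set~ c] :\ d| = 2 * n - 2.
Proof.
move=> cd; have := cardsD1 d [set~ c]; rewrite cardsC1 cardT !inE eq_sym cd /= => h; lia.
Qed.

Lemma rho_unique t x y : t != p -> t != q -> x \in Rn t -> y \in Rn t -> x = y.
Proof. by move=> tp tq; rewrite !rho_Rn // => /eqP-> /eqP->. Qed.

Lemma pick_other x a : (x == p) || (x == q) -> a \in Rn x ->
  exists s, s != a /\ forall y, (y \in Rn x) = (y == a) || (y == s).
Proof.
move=> hx ha.
have c2 : #|Rn x| = 2 by rewrite Rn_card hx.
rewrite (cardsD1 a) ha in c2.
have /cards1P [s hs] : #|Rn x :\ a| == 1 by move: c2; rewrite add1n => [[->]].
have : s \in Rn x :\ a by rewrite hs set11.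
rewrite in_setD1 => /andP[sa sR].
exists s; split=> // y.
have : (y \in Rn x :\ a) = (y != a) && (y \in Rn x) by rewrite in_setD1.
rewrite hs inE.
case: (y =P a) => [->|_] /=; first by rewrite ha.
by move=> ->.
Qed.

Lemma exists_out (s : seq T) : size s < #|T| -> exists c, c \notin s.
Proof.
move=> h; case: (pickP (fun c => c \notin s)) => [c hc|h0]; first by exists c.
have : #|T| <= #|s|.
  apply: subset_leq_card; apply/subsetP=> x _; by move: (h0 x) => /= /negbFE.
have := card_size s; lia.
Qed.

Lemma build2 (L : seq (T * T)) (m1 m2 : T) :
  uniq (m1 :: m2 :: flatL L) -> p \in flatL L -> q \in flatL L ->
  all (fun xy => adj xy.1 xy.2) L ->
  {subset Rn p <= m1 :: m2 :: flatL L} -> {subset Rn q <= m1 :: m2 :: flatL L} ->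
  all (fun x => (x != p) ==> (x != q) ==> (rho x \in m1 :: m2 :: flatL L)) (m1 :: m2 :: flatL L) ->
  k_matching adj (n - 1) [set [set t; patch L t] | t in [set~ m1] :\ m2] /\
  (forall x y, (x, y) \in L -> [set x; y] \in [set [set t; patch L t] | t in [set~ m1] :\ m2]) /\
  (forall t, t \notin m1 :: m2 :: flatL L -> [set t; rho t] \in [set [set t; patch L t] | t in [set~ m1] :\ m2]).
Proof.
move=> h1 h2 h3 h4 h5 h6 h7; apply: build => //.
  by move=> xy /(allP h4).
by move=> x /(allP h7) /implyP H /H /implyP.
Qed.

Lemma assemble (a : T) (K3 K4 : {set {set T}}) :
  k_matching adj (n - 1) K3 -> k_matching adj (n - 1) K4 ->
  [set a; mu a] \in K3 :|: K4 ->
  (forall y, y \in Rn p -> [set p; y] \in K3 :|: K4) ->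
  (forall y, y \in Rn q -> [set q; y] \in K3 :|: K4) ->
  (forall x, x != p -> x != q -> rho x != p -> rho x != q -> [set x; rho x] \in K3 :|: K4) ->
  exists Ms, size Ms = 4 /\ k_cover adj (n - 1) Ms.
Proof.
move=> h3 h4 ha hP hQ hZ.
have am : a != mu a by apply: adj_neq.
have f1D : forall t, t \in [set~ p] :\ q -> nu t \in [set~ p] :\ q.
  move=> t; rewrite !inE => /andP[tq tp]; by rewrite nu_outp ?nu_outq.
have f1f : forall t, t \in [set~ p] :\ q -> nu (nu t) = t.
  move=> t; rewrite !inE => /andP[tq tp]; by rewrite nu_inv.
have f1a : forall t, t \in [set~ p] :\ q -> adj t (nu t).
  move=> t; rewrite !inE => /andP[tq tp]; by rewrite nu_adj.
have f2D : forall t, t \in [set~ a] :\ mu a -> mu t \in [set~ a] :\ mu a.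
  move=> t; rewrite !inE => /andP[t1 t2]; apply/andP; split.
    by apply: contra t2 => /eqP/(congr1 mu); rewrite !mu_inv => ->.
  by apply: contra t1 => /eqP <-; rewrite mu_inv.
have [m1 c1] := @inv_matching T adj adj_irr ([set~ p] :\ q) nu f1D f1f f1a.
have [m2 c2] := @inv_matching T adj adj_irr ([set~ a] :\ mu a) mu f2D
  (fun t _ => mu_inv t) (fun t _ => mu_adj t).
set K1 := [set [set t; nu t] | t in [set~ p] :\ q] in m1 c1.
set K2 := [set [set t; mu t] | t in [set~ a] :\ mu a] in m2 c2.
exists [:: K1; K2; K3; K4]; split=> //; split.
  move=> F; rewrite !inE => /or4P[]/eqP-> //.
    by split=> //; move: c1; rewrite cardD2 //; set k := #|_|; lia.
  by split=> //; move: c2; rewrite cardD2 //; set k := #|_|; lia.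
have inU : forall e, e \in K3 :|: K4 -> e \in K1 :|: (K2 :|: (K3 :|: K4)).
  by move=> e h; apply/setUP; right; apply/setUP; right.
apply/eqP; rewrite eqEsubset !big_cons big_nil setU0; apply/andP; split.
  by rewrite !subUset m1.1 m2.1 h3.1.1 h4.1.1.
apply/subsetP => e /edgesP [x [y [axy ->]]].
case: (y =P mu x) => [ey|/eqP ny].
  case: (x =P a) => [ex|/eqP nxa]; first by rewrite ey ex; apply: inU.
  case: (x =P mu a) => [ex|/eqP nxm].
    by rewrite ey ex mu_inv set2C; apply: inU.
  rewrite ey; apply/setUP; right; apply/setUP; left; apply: imset_f.
  by rewrite !inE nxm nxa.
case: (x =P p) => [ex|/eqP xp].
  rewrite ex; apply/inU/hP; by rewrite RnP nu_p -ex ny axy.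
case: (x =P q) => [ex|/eqP xq].
  rewrite ex; apply/inU/hQ; by rewrite RnP nu_q -ex ny axy.
case: (y =P nu x) => [->|/eqP yn].
  by apply/setUP; left; apply: imset_f; rewrite !inE xp xq.
have : y \in Rn x by rewrite RnP yn ny axy.
rewrite rho_Rn // => /eqP->.
case: (rho x =P p) => [rp|/eqP rp].
  by rewrite rp set2C; apply/inU/hP/rho_p.
case: (rho x =P q) => [rq|/eqP rq].
  by rewrite rq set2C; apply/inU/hQ/rho_q.
exact/inU/hZ.
Qed.


Hypothesis n4 : 4 <= n.

Lemma notRn x y : y \in Rn x -> x != y.
Proof. by rewrite RnP => /and3P[_ _ /(adj_neq adj_irr)]. Qed.

Lemma rho_of x y : x != p -> x != q -> y \in Rn x -> rho x = y.
Proof. by move=> xp xq; rewrite rho_Rn // => /eqP. Qed.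

Lemma rho_out (S : seq T) t : p \in S -> q \in S -> {subset Rn p <= S} -> {subset Rn q <= S} ->
  all (fun x => (x != p) ==> (x != q) ==> (rho x \in S)) S -> t \notin S ->
  [/\ rho t \notin S, t != p, t != q & rho (rho t) = t].
Proof.
move=> pin qin Rp Rq /allP clos tS.
have tp : t != p by apply: contraNneq tS => ->.
have tq : t != q by apply: contraNneq tS => ->.
have rS : rho t \notin S.
  apply/negP=> rX.
  case: (rho t =P p) => [rp|/eqP rp].
    by move: tS; rewrite (Rp _ (rho_p tp tq rp)).
  case: (rho t =P q) => [rq|/eqP rq].
    by move: tS; rewrite (Rq _ (rho_q tp tq rq)).
  move: (clos _ rX); rewrite rp rq /= rho_inv //; by rewrite (negbTE tS).
split=> //; apply: rho_inv => //; by apply: contraNneq rS => ->.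
Qed.

Lemma core a : a \in Rn p -> a != q -> mu a != q -> mu a \notin Rn p ->
  exists Ms, size Ms = 4 /\ k_cover adj (n - 1) Ms.
Proof.
move=> aR aq.
have ap : a != p by rewrite eq_sym; apply: notRn.
have rap : rho a = p by apply: rho_of => //; exact: Rn_sym.
have [b eb] : exists b, mu a = b by eexists.
rewrite eb => bq bR.
have ab : adj a b by rewrite -eb.
have ba : b != a by rewrite eq_sym; apply: adj_neq.
have bp : b != p.
  apply/eqP => bp; move: aR; rewrite RnP -bp -eb mu_inv eqxx /=; by rewrite andbF.
have [s [sa hRp]] := pick_other (x := p) (a := a) ltac:(by rewrite eqxx) aR.
have sR : s \in Rn p by rewrite hRp eqxx orbT.
have bs : b != s by apply: contraNneq bR => ->.
have sp : s != p by rewrite eq_sym; apply: notRn.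
have apa : adj p a by move: aR; rewrite RnP => /and3P[].
have aps : adj p s by move: sR; rewrite RnP => /and3P[].
case: (s =P q) => [sq|/eqP sq].
  subst s.
  have pRq : p \in Rn q by apply: Rn_sym.
  have [y [yp hRq]] := pick_other (x:=q) (a:=p) ltac:(by rewrite eqxx orbT) pRq.
  have yR : y \in Rn q by rewrite hRq eqxx orbT.
  have yq : y != q by rewrite eq_sym; apply: notRn.
  have pa : p \in Rn a by apply: Rn_sym.
  have ya : y != a.
    apply/eqP => e; have qa : q \in Rn a by rewrite -e; apply: Rn_sym.
    by move: pq; rewrite (rho_unique ap aq pa qa) eqxx.
  have ryq : rho y = q by apply: rho_of => //; exact: Rn_sym.
  have aqy : adj q y by move: yR; rewrite RnP => /and3P[].
  have aap : adj a p by rewrite adj_sym.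
  have clS : all (fun x => (x != p) ==> (x != q) ==> (rho x \in [:: p; q; a; y])) [:: p; q; a; y].
    by rewrite /= rap ryq; gen.
  have RpS : {subset Rn p <= [:: p; q; a; y]} by move=> t; rewrite hRp => /orP[]/eqP->; gen.
  have RqS : {subset Rn q <= [:: p; q; a; y]} by move=> t; rewrite hRq => /orP[]/eqP->; gen.
  case: (b =P y) => [by'|/eqP nby].
    rewrite by' in eb ab.
    have [c cS] : exists c, c \notin [:: p; q; a; y].
      by apply: exists_out; rewrite /= cardT; apply: lt_2n.
    have [c'S cp cq rcc] := @rho_out [:: p; q; a; y] c ltac:(gen) ltac:(gen) RpS RqS clS cS.
    have [c' ec'] : exists c', rho c = c' by eexists.
    rewrite ec' in c'S rcc.
    have acc : adj c c' by rewrite -ec'; apply: rho_adj.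
    have cc' : c != c' by apply: adj_neq.
    nors cS; nors c'S.
    have clS2 : all (fun x => (x != p) ==> (x != q) ==> (rho x \in [:: p; q; a; y; c; c']))
       [:: p; q; a; y; c; c'] by rewrite /= rap ryq ec' rcc; gen.
    have RpS2 : {subset Rn p <= [:: p; q; a; y; c; c']} by move=> t; rewrite hRp => /orP[]/eqP->; gen.
    have RqS2 : {subset Rn q <= [:: p; q; a; y; c; c']} by move=> t; rewrite hRq => /orP[]/eqP->; gen.
    have [c2 c2S] : exists c2, c2 \notin [:: p; q; a; y; c; c'].
      by apply: exists_out; rewrite /= cardT; apply: lt_2n.
    have [c2'S c2p c2q rcc2] := @rho_out [:: p; q; a; y; c; c'] c2 ltac:(gen) ltac:(gen) RpS2 RqS2 clS2 c2S.
    have [c2' ec2'] : exists c2', rho c2 = c2' by eexists.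
    rewrite ec2' in c2'S rcc2.
    have acc2 : adj c2 c2' by rewrite -ec2'; apply: rho_adj.
    have cc2' : c2 != c2' by apply: adj_neq.
    nors c2S; nors c2'S.
    have aya : adj y a by rewrite adj_sym.
    have [m3 [L3 D3]] := @build2 [:: (a, p); (q, y)] c c'
      ltac:(gen) ltac:(gen) ltac:(gen) ltac:(by rewrite /= aap aqy)
      ltac:(by move=> t; rewrite hRp => /orP[]/eqP->; gen)
      ltac:(by move=> t; rewrite hRq => /orP[]/eqP->; gen)
      ltac:(by rewrite /= ec' rcc rap ryq; gen).
    have [m4 [L4 D4]] := @build2 [:: (p, q); (y, a)] c2 c2'
      ltac:(gen) ltac:(gen) ltac:(gen) ltac:(by rewrite /= aps aya)
      ltac:(by move=> t; rewrite hRp => /orP[]/eqP->; gen)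
      ltac:(by move=> t; rewrite hRq => /orP[]/eqP->; gen)
      ltac:(by rewrite /= ec2' rcc2 rap ryq; gen).
    apply: (assemble (a := a) m3 m4).
    - by rewrite eb set2C; apply/setUP; right; apply: L4; gen.
    - move=> t; rewrite hRp => /orP[]/eqP->.
        by rewrite set2C; apply/setUP; left; apply: L3; gen.
      by apply/setUP; right; apply: L4; gen.
    - move=> t; rewrite hRq => /orP[]/eqP->.
        by rewrite set2C; apply/setUP; right; apply: L4; gen.
      by apply/setUP; left; apply: L3; gen.
    move=> x xp xq rp rq.
    case: (boolP (x \in [:: c, c' & flatL [:: (a, p); (q, y)]])) => h3;
      last by apply/setUP; left; apply: D3.
    case: (boolP (x \in [:: c2, c2' & flatL [:: (p, q); (y, a)]])) => h4;
      last by apply/setUP; right; apply: D4.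
    rewrite /= !inE in h3; splitx h3; move/eqP: h3 => ex; subst x; rewrite /= in xp xq rp rq h4 *;
      first [ by rewrite eqxx in xp | by rewrite eqxx in xq
            | by move: rp; rewrite ?rap eqxx | by move: rq; rewrite ?ryq eqxx
            | by move: h4; rewrite /= !inE; neq ].
  have [b'S bp' bq' rbb] := @rho_out [:: p; q; a; y] b ltac:(gen) ltac:(gen) RpS RqS clS
    ltac:(by rewrite /= !inE; neq).
  have [b' eb'] : exists b', rho b = b' by eexists.
  rewrite eb' in b'S rbb.
  have abb' : adj b b' by rewrite -eb'; apply: rho_adj.
  have bb' : b != b' by apply: adj_neq.
  nors b'S.
  have clS2 : all (fun x => (x != p) ==> (x != q) ==> (rho x \in [:: p; q; a; y; b; b']))
     [:: p; q; a; y; b; b'] by rewrite /= rap ryq eb' rbb; gen.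
  have RpS2 : {subset Rn p <= [:: p; q; a; y; b; b']} by move=> t; rewrite hRp => /orP[]/eqP->; gen.
  have RqS2 : {subset Rn q <= [:: p; q; a; y; b; b']} by move=> t; rewrite hRq => /orP[]/eqP->; gen.
  have [c cS] : exists c, c \notin [:: p; q; a; y; b; b'].
    by apply: exists_out; rewrite /= cardT; apply: lt_2n.
  have [c'S cp cq rcc] := @rho_out [:: p; q; a; y; b; b'] c ltac:(gen) ltac:(gen) RpS2 RqS2 clS2 cS.
  have [c' ec'] : exists c', rho c = c' by eexists.
  rewrite ec' in c'S rcc.
  have acc : adj c c' by rewrite -ec'; apply: rho_adj.
  have cc' : c != c' by apply: adj_neq.
  nors cS; nors c'S.
  have ab'b : adj b' b by rewrite adj_sym.
  have aba : adj b a by rewrite adj_sym.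
  have [m3 [L3 D3]] := @build2 [:: (b', b); (a, p); (q, y)] c c'
    ltac:(gen) ltac:(gen) ltac:(gen) ltac:(by rewrite /= ab'b aap aqy)
    ltac:(by move=> t; rewrite hRp => /orP[]/eqP->; gen)
    ltac:(by move=> t; rewrite hRq => /orP[]/eqP->; gen)
    ltac:(by rewrite /= ec' rcc eb' rbb rap ryq; gen).
  have [m4 [L4 D4]] := @build2 [:: (b, a); (p, q)] b' y
    ltac:(gen) ltac:(gen) ltac:(gen) ltac:(by rewrite /= aba aps)
    ltac:(by move=> t; rewrite hRp => /orP[]/eqP->; gen)
    ltac:(by move=> t; rewrite hRq => /orP[]/eqP->; gen)
    ltac:(by rewrite /= eb' rbb rap ryq; gen).
  apply: (assemble (a := a) m3 m4).
  - by rewrite eb set2C; apply/setUP; right; apply: L4; gen.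
  - move=> t; rewrite hRp => /orP[]/eqP->.
      by rewrite set2C; apply/setUP; left; apply: L3; gen.
    by apply/setUP; right; apply: L4; gen.
  - move=> t; rewrite hRq => /orP[]/eqP->.
      by rewrite set2C; apply/setUP; right; apply: L4; gen.
    by apply/setUP; left; apply: L3; gen.
  move=> x xp xq rp rq.
  case: (boolP (x \in [:: b', y & flatL [:: (b, a); (p, q)]])) => h4;
    last by apply/setUP; right; apply: D4.
  rewrite /= !inE in h4; splitx h4; move/eqP: h4 => ex; subst x; rewrite /= in xp xq rp rq *;
    first [ by rewrite eqxx in xp | by rewrite eqxx in xq
          | by move: rp; rewrite ?rap eqxx | by move: rq; rewrite ?ryq eqxx | idtac ].
    by rewrite rbb; apply/setUP; left; apply: L3; gen.
  by rewrite eb' set2C; apply/setUP; left; apply: L3; gen.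

have rsp : rho s = p by apply: rho_of => //; exact: Rn_sym.
have qRp : q \notin Rn p by rewrite hRp; neq.
have pRq : p \notin Rn q by apply: contra qRp => /Rn_sym.
have [w [z [zw [hRq hbw]]]] : exists w z, z != w /\
    (forall y, (y \in Rn q) = (y == w) || (y == z)) /\ (b \in Rn q -> b = w).
  case: (boolP (b \in Rn q)) => hb.
    have [z [zb h]] := pick_other (x:=q) (a:=b) ltac:(by rewrite eqxx orbT) hb.
    by exists b, z.
  have /cards2P [w0 [w1 [_ h0]]] : #|Rn q| == 2 by rewrite Rn_card eqxx orbT.
  have w0R : w0 \in Rn q by rewrite h0 !inE eqxx.
  have [z [zw h]] := pick_other (x:=q) (a:=w0) ltac:(by rewrite eqxx orbT) w0R.
  by exists w0, z; split=> //; split=> // h'; rewrite h' in hb.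
have wR : w \in Rn q by rewrite hRq eqxx.
have zR : z \in Rn q by rewrite hRq eqxx orbT.
have pa : p \in Rn a by apply: Rn_sym.
have ps : p \in Rn s by apply: Rn_sym.
have wq : w != q by rewrite eq_sym; apply: notRn.
have zq : z != q by rewrite eq_sym; apply: notRn.
have wp : w != p by apply: contraNneq pRq => <-.
have zp : z != p by apply: contraNneq pRq => <-.
have rwq : rho w = q by apply: rho_of => //; exact: Rn_sym.
have rzq : rho z = q by apply: rho_of => //; exact: Rn_sym.
have wa : w != a.
  apply/eqP => e; have qa : q \in Rn a by rewrite -e; apply: Rn_sym.
  by move: pq; rewrite (rho_unique ap aq pa qa) eqxx.
have za : z != a.
  apply/eqP => e; have qa : q \in Rn a by rewrite -e; apply: Rn_sym.
  by move: pq; rewrite (rho_unique ap aq pa qa) eqxx.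
have ws : w != s.
  apply/eqP => e; have qa : q \in Rn s by rewrite -e; apply: Rn_sym.
  by move: pq; rewrite (rho_unique sp sq ps qa) eqxx.
have zs : z != s.
  apply/eqP => e; have qa : q \in Rn s by rewrite -e; apply: Rn_sym.
  by move: pq; rewrite (rho_unique sp sq ps qa) eqxx.
have aqw : adj q w by move: wR; rewrite RnP => /and3P[].
have aqz : adj q z by move: zR; rewrite RnP => /and3P[].
case: (b =P w) => [bw|/eqP bw].
  rewrite bw in eb ab.
  have [c cS] : exists c, c \notin [:: p; q; a; s; w; z].
    by apply: exists_out; rewrite /= cardT; apply: lt_2n.
  have [c'S cp cq rcc] := @rho_out [:: p; q; a; s; w; z] c ltac:(gen) ltac:(gen)
    ltac:(by move=> y; rewrite hRp => /orP[]/eqP->; gen)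
    ltac:(by move=> y; rewrite hRq => /orP[]/eqP->; gen)
    ltac:(by rewrite /= rsp rzq rap rwq; gen) cS.
  have [c' ec'] : exists c', rho c = c' by eexists.
  rewrite ec' in c'S rcc.
  have acc : adj c c' by rewrite -ec'; apply: rho_adj.
  have cc' : c != c' by apply: adj_neq.
  nors cS; nors c'S.
  have asp : adj s p by rewrite adj_sym.
  have [m3 [L3 D3]] := @build2 [:: (s, p); (a, w); (q, z)] c c'
    ltac:(gen) ltac:(gen) ltac:(gen) ltac:(by rewrite /= asp ab aqz)
    ltac:(by move=> y; rewrite hRp => /orP[]/eqP->; gen)
    ltac:(by move=> y; rewrite hRq => /orP[]/eqP->; gen)
    ltac:(by rewrite /= ec' rcc rsp rzq rap rwq; gen).
  have [m4 [L4 D4]] := @build2 [:: (p, a); (w, q)] s z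
    ltac:(gen) ltac:(gen) ltac:(gen) ltac:(by rewrite /= apa (adj_sym w q) aqw)
    ltac:(by move=> y; rewrite hRp => /orP[]/eqP->; gen)
    ltac:(by move=> y; rewrite hRq => /orP[]/eqP->; gen)
    ltac:(by rewrite /= rsp rzq rap rwq; gen).
  apply: (assemble (a := a) m3 m4).
  - by rewrite eb; apply/setUP; left; apply: L3; gen.
  - move=> y; rewrite hRp => /orP[]/eqP->.
      by apply/setUP; right; apply: L4; gen.
    by rewrite set2C; apply/setUP; left; apply: L3; gen.
  - move=> y; rewrite hRq => /orP[]/eqP->.
      by rewrite set2C; apply/setUP; right; apply: L4; gen.
    by apply/setUP; left; apply: L3; gen.
  move=> x xp xq rp rq.
  case: (boolP (x \in [:: s, z & flatL [:: (p, a); (w, q)]])) => h4;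
    last by apply/setUP; right; apply: D4.
  rewrite /= !inE in h4; splitx h4; move/eqP: h4 => ex; subst x; rewrite /= in xp xq rp rq *;
    first [ by rewrite eqxx in xp | by rewrite eqxx in xq
          | by move: rp; rewrite ?rsp ?rap eqxx | by move: rq; rewrite ?rzq ?rwq eqxx ].

have bnR : b \notin Rn q by apply/negP => /hbw e; rewrite e eqxx in bw.
have bz : b != z by apply: contraNneq bnR => ->.
have [b' eb'] : exists b', rho b = b' by eexists.
have abb' : adj b b' by rewrite -eb'; apply: rho_adj.
have b'b : b' != b by rewrite eq_sym; apply: adj_neq.
have b'p : b' != p.
  apply/eqP => e; have : b \in Rn p by apply: rho_p => //; rewrite eb'.
  by rewrite (negbTE bR).
have b'q : b' != q.
  apply/eqP => e; have : b \in Rn q by apply: rho_q => //; rewrite eb'.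
  by rewrite (negbTE bnR).
have rb' : rho b' = b by rewrite -eb' rho_inv // eb'.
have b'a : b' != a by apply/eqP => e; move: rb'; rewrite e rap => e'; rewrite e' eqxx in bp.
have b's : b' != s by apply/eqP => e; move: rb'; rewrite e rsp => e'; rewrite e' eqxx in bp.
have b'w : b' != w by apply/eqP => e; move: rb'; rewrite e rwq => e'; rewrite e' eqxx in bq.
have b'z : b' != z by apply/eqP => e; move: rb'; rewrite e rzq => e'; rewrite e' eqxx in bq.
have ab'b : adj b' b by rewrite adj_sym.
have aap : adj a p by rewrite adj_sym.
have awq : adj w q by rewrite adj_sym.
have aba : adj b a by rewrite adj_sym.
have [m3 [L3 D3]] := @build2 [:: (b', b); (a, p); (w, q)] s z
  ltac:(gen) ltac:(gen) ltac:(gen) ltac:(by rewrite /= ab'b aap awq)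
  ltac:(by move=> y; rewrite hRp => /orP[]/eqP->; gen)
  ltac:(by move=> y; rewrite hRq => /orP[]/eqP->; gen)
  ltac:(by rewrite /= rsp rzq rb' eb' rap rwq; gen).
have [m4 [L4 D4]] := @build2 [:: (b, a); (p, s); (q, z)] b' w
  ltac:(gen) ltac:(gen) ltac:(gen) ltac:(by rewrite /= aba aps aqz)
  ltac:(by move=> y; rewrite hRp => /orP[]/eqP->; gen)
  ltac:(by move=> y; rewrite hRq => /orP[]/eqP->; gen)
  ltac:(by rewrite /= rsp rzq rb' eb' rap rwq; gen).
apply: (assemble (a := a) m3 m4).
- by rewrite eb set2C; apply/setUP; right; apply: L4; gen.
- move=> y; rewrite hRp => /orP[]/eqP->.
    by rewrite set2C; apply/setUP; left; apply: L3; gen.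
  by apply/setUP; right; apply: L4; gen.
- move=> y; rewrite hRq => /orP[]/eqP->.
    by rewrite set2C; apply/setUP; left; apply: L3; gen.
  by apply/setUP; right; apply: L4; gen.
move=> x xp xq rp rq.
case: (boolP (x \in [:: s, z & flatL [:: (b', b); (a, p); (w, q)]])) => h3;
  last by apply/setUP; left; apply: D3.
rewrite /= !inE in h3; splitx h3; move/eqP: h3 => ex; subst x; rewrite /= in xp xq rp rq *;
  first [ by rewrite eqxx in xp | by rewrite eqxx in xq
        | by move: rp; rewrite ?rsp ?rap eqxx | by move: rq; rewrite ?rzq ?rwq eqxx | idtac ].
  by rewrite rb'; apply/setUP; left; apply: L3; gen.
by rewrite eb' set2C; apply/setUP; left; apply: L3; gen.
Qed.

Definition nu2 (x : T) t :=
  if t == p then x else if t == x then p else if t == nu x then mu (nu x) else nu t.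

Section Nu2.
Variable x : T.
Hypothesis xR : x \in Rn p.
Hypothesis xq : x != q.

Let xp : x != p. Proof. by rewrite eq_sym; apply: notRn. Qed.
Let x'p : nu x != p. Proof. exact: nu_outp. Qed.
Let x'q : nu x != q. Proof. exact: nu_outq. Qed.
Let x'x : nu x != x. Proof. by rewrite eq_sym; apply: (adj_neq adj_irr (nu_adj xp xq)). Qed.
Let apx : adj p x. Proof. by move: xR; rewrite RnP => /and3P[]. Qed.
Let xmp : x != mu p. Proof. by move: xR; rewrite RnP => /and3P[]. Qed.

Lemma nu_inj t u : t != p -> t != q -> u != p -> u != q -> nu t = nu u -> t = u.
Proof. by move=> tp tq up uq e; rewrite -(nu_inv tp tq) e nu_inv. Qed.

Lemma nu2_pq : nu x != q. Proof. exact: x'q. Qed.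

Lemma nu2_adj t : t != nu x -> t != q -> adj t (nu2 x t).
Proof.
move=> t1 tq; rewrite /nu2.
case: (t =P p) => [->|/eqP tp] //.
case: (t =P x) => [->|/eqP tx]; first by rewrite adj_sym.
by rewrite (negbTE t1); apply: nu_adj.
Qed.

Lemma nu2_inv t : t != nu x -> t != q -> nu2 x (nu2 x t) = t.
Proof.
move=> t1 tq; rewrite /nu2.
case: (t =P p) => [->|/eqP tp]; first by rewrite (negbTE xp) eqxx.
case: (t =P x) => [->|/eqP tx]; first by rewrite eqxx.
rewrite (negbTE t1) (negbTE (nu_outp tp tq)).
have -> : (nu t == x) = false.
  by apply/negbTE; apply: contra t1 => /eqP <-; rewrite nu_inv.
have -> : (nu t == nu x) = false.
  by apply/negbTE; apply: contra tx => /eqP/nu_inj ->.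
exact: nu_inv.
Qed.

Lemma nu2_p : nu2 x (nu x) = mu (nu x).
Proof. by rewrite /nu2 (negbTE x'p) (negbTE x'x) eqxx. Qed.

Lemma nu2_q : nu2 x q = mu q.
Proof. by rewrite /nu2 eq_sym (negbTE pq) eq_sym (negbTE xq) eq_sym (negbTE x'q). Qed.

Lemma nu2_outp t : t != nu x -> t != q -> nu2 x t != nu x.
Proof.
move=> t1 tq; rewrite /nu2.
case: (t =P p) => [_|/eqP tp]; first by rewrite eq_sym.
case: (t =P x) => [_|/eqP tx]; first by rewrite eq_sym.
rewrite (negbTE t1); by apply: contra tx => /eqP/nu_inj ->.
Qed.

Lemma nu2_outq t : t != nu x -> t != q -> nu2 x t != q.
Proof.
move=> t1 tq; rewrite /nu2.
case: (t =P p) => [_|/eqP tp] //.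
case: (t =P x) => [_|/eqP tx] //.
rewrite (negbTE t1); exact: nu_outq.
Qed.

Lemma nu2_mu t : t != nu x -> t != q -> nu2 x t != mu t.
Proof.
move=> t1 tq; rewrite /nu2.
case: (t =P p) => [->|/eqP tp] //.
case: (t =P x) => [->|/eqP tx].
  by apply: contra xmp => /eqP ->; rewrite mu_inv.
rewrite (negbTE t1); exact: nu_mu.
Qed.

End Nu2.

Lemma nbr3 t u : adj t u -> [\/ u = mu t, u = nu t | u \in Rn t].
Proof.
move=> h; case: (u =P mu t) => [|/eqP um]; first by constructor 1.
case: (u =P nu t) => [|/eqP un]; first by constructor 2.
by constructor 3; rewrite RnP un um h.
Qed.

End Config.

Section Main.
Variables (T : finType) (adj : rel T).
Hypothesis adj_sym : symmetric adj.
Hypothesis adj_irr : irreflexive adj.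
Hypothesis cub : cubic adj.
Hypothesis conn : connected_graph adj.
Variable n : nat.
Hypothesis cardT : #|T| = 2 * n.
Hypothesis n4 : 4 <= n.
Variables (mu nu : T -> T) (p q : T).
Hypothesis mu_adj : forall x, adj x (mu x).
Hypothesis mu_inv : forall x, mu (mu x) = x.
Hypothesis pq : p != q.
Hypothesis nu_adj : forall x, x != p -> x != q -> adj x (nu x).
Hypothesis nu_inv : forall x, x != p -> x != q -> nu (nu x) = x.
Hypothesis nu_p : nu p = mu p.
Hypothesis nu_q : nu q = mu q.
Hypothesis nu_outp : forall x, x != p -> x != q -> nu x != p.
Hypothesis nu_outq : forall x, x != p -> x != q -> nu x != q.
Hypothesis nu_mu : forall x, x != p -> x != q -> nu x != mu x.

Local Notation RR := (Rn adj mu nu).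

Lemma good_p a : a \in RR p -> a != q -> mu a != q -> mu a \notin RR p ->
  exists Ms, size Ms = 4 /\ k_cover adj (n - 1) Ms.
Proof. exact: (core adj_sym adj_irr cub cardT mu_adj mu_inv pq nu_adj nu_inv nu_p nu_q nu_outp nu_outq nu_mu n4). Qed.

Lemma good_q a : a \in RR q -> a != p -> mu a != p -> mu a \notin RR q ->
  exists Ms, size Ms = 4 /\ k_cover adj (n - 1) Ms.
Proof.
have qp : q != p by rewrite eq_sym.
exact: (core adj_sym adj_irr cub cardT mu_adj mu_inv qp
  (fun x h1 h2 => nu_adj h2 h1) (fun x h1 h2 => nu_inv h2 h1) nu_q nu_p
  (fun x h1 h2 => nu_outq h2 h1) (fun x h1 h2 => nu_outp h2 h1) (fun x h1 h2 => nu_mu h2 h1) n4).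
Qed.

Lemma repair x a2 : x \in RR p -> x != q ->
  a2 \in Rn adj mu (nu2 mu nu p x) (nu x) -> a2 != q -> mu a2 != q ->
  mu a2 \notin Rn adj mu (nu2 mu nu p x) (nu x) ->
  exists Ms, size Ms = 4 /\ k_cover adj (n - 1) Ms.
Proof.
move=> xR xq.
exact: (core adj_sym adj_irr cub cardT mu_adj mu_inv (nu2_pq adj_irr nu_outq xR xq)
  (nu2_adj adj_sym nu_adj xR) (nu2_inv adj_irr nu_inv nu_outp xR xq)
  (nu2_p adj_irr nu_adj nu_outp xR xq) (nu2_q adj_irr pq nu_q nu_outq xR xq)
  (nu2_outp adj_irr nu_adj nu_inv nu_outp xR xq) (nu2_outq mu pq nu_outq xq)
  (nu2_mu mu_inv nu_mu xR) n4).
Qed.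

Lemma main_cfg : exists Ms, size Ms = 4 /\ k_cover adj (n - 1) Ms.
Proof.
have RnS : forall x y, y \in RR x -> x \in RR y by move=> x y; apply: (Rn_sym adj_sym mu_inv nu_inv nu_p nu_q).
have notR : forall x y, y \in RR x -> x != y by move=> x y; apply: (notRn adj_irr).
have rhoU : forall t x y, t != p -> t != q -> x \in RR t -> y \in RR t -> x = y.
  by move=> t x y h1 h2 h3 h4; apply: (rho_unique cub mu_adj nu_adj nu_p nu_q nu_mu h1 h2 h3 h4).
have PO : forall x a, (x == p) || (x == q) -> a \in RR x ->
    exists s, s != a /\ forall y, (y \in RR x) = (y == a) || (y == s).
  by move=> x a h1 h2; apply: (pick_other cub mu_adj nu_adj nu_p nu_q nu_mu h1 h2).
have mux : forall x, mu x != x by move=> x; rewrite eq_sym; apply: (adj_neq adj_irr (mu_adj x)).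
have [a aR] : exists a, a \in RR p.
  apply/set0Pn; rewrite -card_gt0 (Rn_card cub mu_adj nu_adj nu_p nu_q nu_mu) eqxx //.
case: (boolP (q \in RR p)) => qR.
  have [x [xq hRp]] : exists x, x != q /\ forall y, (y \in RR p) = (y == x) || (y == q).
    have [s [sa h]] := PO p a ltac:(by rewrite eqxx) aR.
    case: (a =P q) => [aq|/eqP aq].
      by exists s; split; [rewrite -aq | move=> y; rewrite h aq orbC].
    exists a; split=> // y; rewrite h.
    have : q \in RR p := qR; rewrite h eq_sym (negbTE aq) /= => /eqP ->.
    by [].
  have xR : x \in RR p by rewrite hRp eqxx.
  have pRq : p \in RR q by apply: RnS.
  have [y [yp hRq]] := PO q p ltac:(by rewrite eqxx orbT) pRq.
  have yR : y \in RR q by rewrite hRq eqxx orbT.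
  have xp : x != p by rewrite eq_sym; apply: notR.
  case: (mu x =P q) => [mxq|/eqP mxq]; last first.
    by apply: (good_p xR xq mxq); rewrite hRp negb_or mxq mux.
  case: (mu y =P p) => [myp|/eqP myp]; last first.
    by apply: (good_q yR yp myp); rewrite hRq negb_or myp mux.
  have yq : y != q by rewrite eq_sym; apply: notR.
  have [x' ex'] : exists x', nu x = x' by eexists.
  have x'p : x' != p by rewrite -ex'; apply: nu_outp.
  have x'q : x' != q by rewrite -ex'; apply: nu_outq.
  have nx' : nu x' = x by rewrite -ex' nu_inv.
  have [r er] : exists r, rho adj mu nu x' = r by eexists.
  have rR : r \in RR x' by rewrite -er; apply: (rho_in cub mu_adj nu_adj nu_p nu_q nu_mu).
  have mqx : mu q = x by rewrite -mxq mu_inv.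
  have x'y : x' != y.
    apply/eqP => ey.
    have mpy : mu p = y by rewrite -myp mu_inv.
    have cl : forall u v, u \in [:: p; q; x; y] -> adj u v -> v \in [:: p; q; x; y].
      move=> u v; rewrite !inE => /or4P[]/eqP-> /(nbr3 mu nu) [->|->|h].
      - by rewrite mpy eqxx /= ?orbT.
      - by rewrite nu_p mpy eqxx /= ?orbT.
      - by move: h; rewrite hRp => /orP[]/eqP->; rewrite eqxx /= ?orbT.
      - by rewrite mqx eqxx /= ?orbT.
      - by rewrite nu_q mqx eqxx /= ?orbT.
      - by move: h; rewrite hRq => /orP[]/eqP->; rewrite eqxx /= ?orbT.
      - by rewrite mxq eqxx /= ?orbT.
      - by rewrite ex' ey eqxx /= ?orbT.
      - by rewrite (rhoU x v p xp xq h (RnS _ _ xR)) eqxx.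
      - by rewrite myp eqxx.
      - by rewrite -ey nx' eqxx /= ?orbT.
      - by rewrite (rhoU y v q yp yq h (RnS _ _ yR)) eqxx /= ?orbT.
    have [c cS] : exists c, c \notin [:: p; q; x; y].
      by apply: (exists_out cardT pq); rewrite /= cardT; apply: lt_2n.
    have clo : closed adj (mem [:: p; q; x; y]).
      move=> u v huv; apply/idP/idP => h; first exact: cl h huv.
      by apply: cl h _; rewrite adj_sym.
    have := closed_connect clo (conn p c).
    by rewrite inE eqxx (negbTE cS).
  have rq : r != q.
    apply/eqP => e; have : x' \in RR q by rewrite -e; apply: RnS.
    by rewrite hRq (negbTE x'p) (negbTE x'y).
  have mrq : mu r != q.
    apply/eqP => e; have rx : r = x by rewrite -mqx -e mu_inv.
    by move: rR; rewrite rx RnP nx' eqxx.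
  have n2 : nu2 mu nu p x x' = mu x'.
    by rewrite -ex' (nu2_p adj_irr nu_adj nu_outp xR xq).
  apply: (repair (a2 := r) xR xq); rewrite ?ex' // ?RnP ?n2.
    by move: rR; rewrite RnP => /and3P[_ -> ->].
  apply/negP => /and3P[_ h1 h2].
  case: (nbr3 mu nu h2) => [e|e|h].
  - by rewrite e eqxx in h1.
  - by move: rq; rewrite -(mu_inv r) e nx' mxq eqxx.
  - by move: (mux r); rewrite (rhoU x' (mu r) r x'p x'q h rR) eqxx.
have [s [sa hRp]] := PO p a ltac:(by rewrite eqxx) aR.
have sR : s \in RR p by rewrite hRp eqxx orbT.
have aq : a != q by apply: contraNneq qR => <-.
have sq : s != q by apply: contraNneq qR => <-.
have ap : a != p by rewrite eq_sym; apply: notR.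
case: (boolP ((mu a != q) && (mu a \notin RR p))) => [/andP[h1 h2]|ga].
  exact: good_p aR aq h1 h2.
case: (boolP ((mu s != q) && (mu s \notin RR p))) => [/andP[h1 h2]|gs].
  exact: good_p sR sq h1 h2.
have mas : mu a = s.
  move: ga gs; rewrite !negb_and !negbK !hRp (negbTE (mux a)) (negbTE (mux s)) /= ?orbF.
  case/orP => [/eqP maq|/eqP //].
  case/orP => [/eqP msq|/eqP msa].
    by move: sa; rewrite -(mu_inv s) msq -maq mu_inv eqxx.
  by rewrite -msa mu_inv.
have n2 : nu2 mu nu p a (nu a) = mu (nu a) by rewrite (nu2_p adj_irr nu_adj nu_outp aR aq).
apply: (repair (a2 := a) aR aq); rewrite ?mas // ?RnP ?n2.
- rewrite adj_sym nu_adj // andbT andbb.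
  apply: contra (nu_mu ap aq) => /eqP e; by rewrite {2}e mu_inv.
- apply/negP => /and3P[_ h1 h2].
  have sp : s != p by rewrite eq_sym; apply: notR.
  rewrite adj_sym in h2.
  case: (nbr3 mu nu h2) => [e|e|h].
  + move: e; rewrite -mas mu_inv => e.
    by move: (nu_adj ap aq); rewrite e adj_irr.
  + move: sa; rewrite (nu_inj nu_inv ap aq sp sq e) eqxx //.
  + have := rhoU s _ _ sp sq h (RnS _ _ sR).
    by move/eqP; rewrite (negbTE (nu_outp ap aq)).
Qed.

End Main.

Lemma mat_uniq (T : finType) (adj : rel T) (F : {set {set T}}) (x y z : T) :
  matching adj F -> [set x; y] \in F -> [set x; z] \in F -> x != y -> y = z.
Proof.
move=> [_ Fd] h1 h2 xy.
case: (eqVneq [set x; y] [set x; z]) => [e|ne].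
  have : y \in [set x; z] by rewrite -e !inE eqxx orbT.
  rewrite !inE => /orP[/eqP e'|/eqP //]; by rewrite e' eqxx in xy.
have := Fd _ _ h1 h2 ne; rewrite -setI_eq0 => /eqP/setP/(_ x); by rewrite !inE !eqxx.
Qed.

Lemma lower_aux m n E : 4 <= n -> 2 * E = 3 * (2 * n) -> E <= m * (n - 1) -> 4 <= m.
Proof. move=> h1 h2 h3; rewrite leqNgt; apply/negP => hm.
have : m * (n - 1) <= 3 * (n - 1) by apply: leq_mul => //; rewrite -ltnS.
lia.
Qed.

Theorem lemma2 (T : finType) (adj : rel T) (n : nat) :
  simple_graph adj -> connected_graph adj -> cubic adj ->
  #|T| = 2 * n -> 8 <= 2 * n ->
  (exists M N : {set {set T}},
      perfect_matching adj M /\ matching adj N /\ #|N| = n - 1 /\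
      M :&: N = set0) ->
  excessive_index_eq adj (n - 1) 4.
Proof.
move=> [adj_sym adj_irr] conn cub cardT n8 [M [N [[Mm Mcov] [Nm [cN MN]]]]].
have n4 : 4 <= n by lia.
split; last first.
  move=> Ms hc; have h1 := cover_size hc; have h2 := card_edges adj_sym adj_irr cub.
  rewrite cardT in h2; exact: lower_aux n4 h2 h1.
pose mu x := odflt x [pick y | adj x y && ([set x; y] \in M)].
have muP : forall x, adj x (mu x) && ([set x; mu x] \in M).
  move=> x; rewrite /mu; case: pickP => [y //|h].
  exfalso; have [e eM xe] := Mcov x.
  have /edgesP [a [b [hab ee]]] := subsetP Mm.1 e eM.
  move: xe; rewrite ee !inE => /orP[/eqP xa|/eqP xb].
    by move: (h b); rewrite xa hab -ee eM.
  by move: (h a); rewrite xb adj_sym hab set2C -ee eM.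
have mu_adj : forall x, adj x (mu x) by move=> x; case/andP: (muP x).
have mu_inv : forall x, mu (mu x) = x.
  move=> x; apply/esym; apply: (mat_uniq Mm (x := mu x)).
  - by rewrite set2C; case/andP: (muP x).
  - by case/andP: (muP (mu x)).
  - by rewrite eq_sym; apply: (adj_neq adj_irr (mu_adj x)).
have cC : #|cover N| = #|N| * 2.
  apply: card_uniform_partition; first by move=> e eN; exact: (card_edge adj_irr (subsetP Nm.1 _ eN)).
  apply/and3P; split => //; first by apply/trivIsetP => A B hA hB; exact: Nm.2.
  apply/negP => h0; have := card_edge adj_irr (subsetP Nm.1 _ h0); by rewrite cards0.
have cCc : #|~: cover N| = 2.
  have := cardsC (cover N); rewrite cC cN cardT => h; lia.
have /cards2P [p [q [pq hpq]]] : #|~: cover N| == 2 by rewrite cCc.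
have inpq : forall x, (x \notin cover N) = (x == p) || (x == q).
  by move=> x; move/setP: hpq => /(_ x); rewrite !inE.
pose nu x := odflt (mu x) [pick y | adj x y && ([set x; y] \in N)].
have nuP : forall x, x != p -> x != q -> adj x (nu x) && ([set x; nu x] \in N).
  move=> x xp xq; rewrite /nu; case: pickP => [y //|h].
  exfalso; have : x \in cover N by rewrite -[_ \in _]negbK inpq negb_or xp xq.
  case/bigcupP => e eN xe.
  have /edgesP [a [b [hab ee]]] := subsetP Nm.1 e eN.
  move: xe; rewrite ee !inE => /orP[/eqP xa|/eqP xb].
    by move: (h b); rewrite xa hab -ee eN.
  by move: (h a); rewrite xb adj_sym hab set2C -ee eN.
have nu_none : forall x, (x == p) || (x == q) -> nu x = mu x.
  move=> x hx; rewrite /nu; case: pickP => [y /andP[_ hy]|//].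
  by move: hx; rewrite -inpq => /negP; case; apply/bigcupP; exists [set x; y]; rewrite // !inE eqxx.
have nu_adj : forall x, x != p -> x != q -> adj x (nu x).
  by move=> x xp xq; case/andP: (nuP x xp xq).
have nu_cov : forall x, x != p -> x != q -> (nu x != p) && (nu x != q).
  move=> x xp xq; rewrite -negb_or -inpq negbK; apply/bigcupP; exists [set x; nu x].
    by case/andP: (nuP x xp xq).
  by rewrite !inE eqxx orbT.
have nu_outp : forall x, x != p -> x != q -> nu x != p by move=> x xp xq; case/andP: (nu_cov x xp xq).
have nu_outq : forall x, x != p -> x != q -> nu x != q by move=> x xp xq; case/andP: (nu_cov x xp xq).
have nu_inv : forall x, x != p -> x != q -> nu (nu x) = x.
  move=> x xp xq; apply/esym; apply: (mat_uniq Nm (x := nu x)).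
  - by rewrite set2C; case/andP: (nuP x xp xq).
  - by case/andP: (nuP (nu x) (nu_outp x xp xq) (nu_outq x xp xq)).
  - by rewrite eq_sym; apply: (adj_neq adj_irr (nu_adj x xp xq)).
have nu_mu : forall x, x != p -> x != q -> nu x != mu x.
  move=> x xp xq; apply/eqP => e.
  have : [set x; mu x] \in M :&: N.
    by rewrite inE; case/andP: (muP x) => _ ->; rewrite -e; case/andP: (nuP x xp xq).
  by rewrite MN inE.
have nu_p : nu p = mu p by apply: nu_none; rewrite eqxx.
have nu_q : nu q = mu q by apply: nu_none; rewrite eqxx orbT.
exact: (main_cfg adj_sym adj_irr cub conn cardT n4 mu_adj mu_inv pq nu_adj nu_inv nu_p nu_q
  nu_outp nu_outq nu_mu).
Qed.
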